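(* Let $\alpha>0$. Suppose $f_1,\dots,f_n:\mathbb{R}^d\to\mathbb{R}$ are convex and $L$-smooth, $r:\mathbb{R}^d\to\mathbb{R}\cup\{\infty\}$ is proper, closed and convex, and $A,B\in\mathbb{R}^{n\times n}$ satisfy the matrix assumptions below. If a point $(\bm{x}^\star,\bm{w}^\star,\bm{u}^\star)\in(\mathbb{R}^{nd})^3$ satisfies $$\bm{w}^\star=\bm{x}^\star-\alpha\nabla F(\bm{x}^\star),\qquad \bm{x}^\star=\mathrm{prox}_{\alpha R}\big(\bm{A}(\bm{w}^\star-\sqrt{\bm{B}}\bm{u}^\star)\big),\qquad \bm{0}=\sqrt{\bm{B}}\big(\bm{w}^\star-\sqrt{\bm{B}}\bm{u}^\star\big),$$ then $\bm{x}^\star=\bm{1}_n\otimes x^\star$ for some $x^\star\in\mathbb{R}^d$, and $x^\star$ solves $\min_{x\in\mathbb{R}^d}\frac1n\sum_{i=1}^n\big[f_i(x)+r(x)\big]$.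
   Context: Notation: for $\bm{x}=\mathrm{col}\{x_1,\dots,x_n\}\in\mathbb{R}^{nd}$ with $x_i\in\mathbb{R}^d$, $F(\bm{x})=\sum_{i=1}^n f_i(x_i)$ and $R(\bm{x})=\sum_{i=1}^n r(x_i)$. For $\alpha>0$, $\mathrm{prox}_{\alpha r}(x)=\arg\min_{s}\{r(s)+\frac{1}{2\alpha}\|s-x\|^2\}$, and $\mathrm{prox}_{\alpha R}$ acts blockwise. $W\in\mathbb{R}^{n\times n}$ is a mixing matrix of an undirected connected graph on $n$ nodes: $W=W^{\sf T}$, $W_{ij}>0$ if $(i,j)$ is an edge, $W_{ij}=0$ if $i\neq j$ and $(i,j)$ is not an edge, and $W\bm{1}=\bm{1}$. Matrices $A,B$ are polynomials in $W$ satisfying: $A^{\sf T}=A$, $A\bm{1}=\bm{1}$, $B\succeq 0$, $\mathrm{null}(B)=\mathrm{span}(\bm{1})$, and $I-A^2-B\succeq 0$. Set $\bm{A}=A\otimes I_d$, $\bm{B}=B\otimes I_d$, and $\sqrt{\bm{B}}=\sqrt{B}\otimes I_d$ where $\sqrt B$ is the positive semidefinite square root of $B$. *)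

(* Defs.v *)
From HB Require Import structures.
From mathcomp Require Import all_boot all_order all_algebra.
From mathcomp Require Import all_classical all_reals all_analysis.
Set Implicit Arguments. Unset Strict Implicit. Unset Printing Implicit Defensive.
Import Order.TTheory GRing.Theory Num.Theory.
Import numFieldNormedType.Exports.
Local Open Scope ring_scope.

(* Vectors of R^{nd} = col{x_1,...,x_n} are represented as n x d matrices
   whose i-th row is x_i.  Then (A (x) I_d) x corresponds to A *m X. *)

Section Defs.
Variable R : realType.

Definition dotv (d : nat) (u v : 'rV[R]_d) : R := \sum_(j < d) u 0 j * v 0 j.
Definition sqnorm (d : nat) (u : 'rV[R]_d) : R := dotv u u.
Definition enorm (d : nat) (u : 'rV[R]_d) : R := Num.sqrt (sqnorm u).

Definition convex_fun (d : nat) (f : 'rV[R]_d -> R) :=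
  forall (x y : 'rV[R]_d) (t : R), 0 <= t <= 1 ->
    f (t *: x + (1 - t) *: y) <= t * f x + (1 - t) * f y.

Definition is_gradient (d : nat) (f : 'rV[R]_d -> R) (g : 'rV[R]_d -> 'rV[R]_d) :=
  forall x : 'rV[R]_d, differentiable f x /\ forall h, 'd f x h = dotv (g x) h.

Definition L_smooth (d : nat) (L : R) (f : 'rV[R]_d -> R) (g : 'rV[R]_d -> 'rV[R]_d) :=
  is_gradient f g /\ forall x y, enorm (g x - g y) <= L * enorm (x - y).

Definition ext_valued (d : nat) (r : 'rV[R]_d -> \bar R) := forall x, r x != -oo%E.
Definition proper_fun (d : nat) (r : 'rV[R]_d -> \bar R) := exists x, (r x < +oo)%E.
Definition closed_fun (d : nat) (r : 'rV[R]_d -> \bar R) :=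
  closed [set p : 'rV[R]_d * R | (r p.1 <= p.2%:E)%E].
Definition convex_efun (d : nat) (r : 'rV[R]_d -> \bar R) :=
  forall (x y : 'rV[R]_d) (t : R), 0 < t < 1 ->
    (r (t *: x + (1 - t) *: y)%R <= t%:E * r x + (1 - t)%R%:E * r y)%E.

Definition is_prox (d : nat) (alpha : R) (r : 'rV[R]_d -> \bar R) (x p : 'rV[R]_d) :=
  forall s : 'rV[R]_d,
    (r p + ((2 * alpha)^-1 * sqnorm (p - x)%R)%:E <=
     r s + ((2 * alpha)^-1 * sqnorm (s - x)%R)%:E)%E.

Definition mxpoly_eval (n : nat) (p : {poly R}) (W : 'M[R]_n) : 'M[R]_n :=
  \sum_(i < size p) p`_i *: W ^+ i.
Definition is_poly_in (n : nat) (M W : 'M[R]_n) := exists p : {poly R}, M = mxpoly_eval p W.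
Definition psd (n : nat) (M : 'M[R]_n) :=
  M^T = M /\ forall v : 'cV[R]_n, 0 <= (v^T *m M *m v) 0 0.
Definition ones (n : nat) : 'cV[R]_n := const_mx 1.

Definition undirected_connected (n : nat) (e : rel 'I_n) :=
  symmetric e /\ irreflexive e /\ forall i j : 'I_n, connect e i j.

Definition mixing_matrix (n : nat) (e : rel 'I_n) (W : 'M[R]_n) :=
  W^T = W /\
  (forall i j, e i j -> 0 < W i j) /\
  (forall i j, i != j -> ~~ e i j -> W i j = 0) /\
  W *m ones n = ones n.

Definition AB_assumptions (n : nat) (W A B : 'M[R]_n) :=
  is_poly_in A W /\ is_poly_in B W /\
  A^T = A /\ A *m ones n = ones n /\
  psd B /\
  (forall v : 'cV[R]_n, B *m v = 0 <-> exists c : R, v = c *: ones n) /\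
  psd (1%:M - A *m A - B).

Definition is_psd_sqrt (n : nat) (S B : 'M[R]_n) := psd S /\ S *m S = B.

End Defs.

(* Main.v *)
Set Warnings "-notation-overridden,-ambiguous-paths,-notation-incompatible-prefix".
Set Warnings "-notation-overridden,-ambiguous-paths,-notation-incompatible-prefix".
Require Import Defs.
From HB Require Import structures.
From mathcomp Require Import all_boot all_order all_algebra.
From mathcomp Require Import all_classical all_reals all_analysis.
From mathcomp Require Import ring lra.
Import Order.TTheory GRing.Theory Num.Theory.
Import numFieldNormedType.Exports.
Local Open Scope ring_scope.
Local Open Scope classical_set_scope.

Section S.
Variable R : realType.
Variable d : nat.
Implicit Types u v w : 'rV[R]_d.

Lemma dotvDl u v w : dotv (u + v) w = dotv u w + dotv v w.
Proof. by rewrite /dotv -big_split; apply: eq_bigr => j _; rewrite mxE mulrDl. Qed.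
Lemma dotvNl u w : dotv (- u) w = - dotv u w.
Proof. by rewrite /dotv -sumrN; apply: eq_bigr => j _; rewrite mxE mulNr. Qed.
Lemma dotvBl u v w : dotv (u - v) w = dotv u w - dotv v w.
Proof. by rewrite dotvDl dotvNl. Qed.
Lemma dotvZl (a : R) u w : dotv (a *: u) w = a * dotv u w.
Proof. by rewrite /dotv mulr_sumr; apply: eq_bigr => j _; rewrite mxE mulrA. Qed.
Lemma dotvC u w : dotv u w = dotv w u.
Proof. by apply: eq_bigr => j _; rewrite mulrC. Qed.
Lemma dotvDr u v w : dotv w (u + v) = dotv w u + dotv w v.
Proof. by rewrite dotvC dotvDl !(dotvC w). Qed.
Lemma dotvZr (a : R) u w : dotv w (a *: u) = a * dotv w u.
Proof. by rewrite dotvC dotvZl dotvC. Qed.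
Lemma dotv0l w : dotv 0 w = 0.
Proof. by rewrite /dotv big1 // => j _; rewrite mxE mul0r. Qed.
Lemma dotv_suml (I : finType) (F : I -> 'rV[R]_d) w :
  dotv (\sum_i F i) w = \sum_i dotv (F i) w.
Proof.
rewrite /dotv exchange_big /=; apply: eq_bigr => j _.
by rewrite summxE mulr_suml.
Qed.
Lemma sqnorm_ge0 u : 0 <= sqnorm u.
Proof. by apply: sumr_ge0 => j _; rewrite -expr2 sqr_ge0. Qed.
Lemma sqnorm_eq0 u : sqnorm u = 0 -> u = 0.
Proof.
move=> H; apply/rowP => j; rewrite mxE.
have H' : \sum_(k < d) u 0 k ^+ 2 = 0.
  by apply: etrans _ H; apply: eq_bigr => k _; rewrite expr2.
have := psumr_eq0P (fun k _ => sqr_ge0 (u 0 k)) H' (isT : predT j).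
by move=> /(_ j) /eqP; rewrite sqrf_eq0 => /eqP.
Qed.
Lemma sqnormD u v : sqnorm (u + v) = sqnorm u + 2 * dotv u v + sqnorm v.
Proof.
rewrite /sqnorm dotvDl !dotvDr (dotvC v u); ring.
Qed.
Lemma sqnormZ (a : R) u : sqnorm (a *: u) = a ^+ 2 * sqnorm u.
Proof. by rewrite /sqnorm dotvZl dotvZr mulrA expr2. Qed.
End S.

Lemma lim_arg (R : realType) (X D S : R) : 0 <= S ->
  (forall t, 0 < t < 1 -> t * X <= t * D + t ^+ 2 * S) -> X <= D.
Proof.
move=> S0 H; apply/ler_addgt0Pr => e e0.
have eS : 0 < e + S + 1 by lra.
set t := e / (e + S + 1).
have t0 : 0 < t by rewrite divr_gt0.
have t1 : t < 1 by rewrite ltr_pdivrMr // mul1r; lra.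
have te : t * (e + S + 1) = e by rewrite /t mulfVK // gt_eqF.
have := H t; rewrite t0 t1 => /(_ isT) Ht.
have : t * X <= t * (D + e).
  apply: (le_trans Ht); rewrite mulrDr lerD2l expr2 -mulrA ler_pM2l //.
  by rewrite -te ler_pM2l //; lra.
by rewrite ler_pM2l.
Qed.

Lemma prox_sub (R : realType) d (alpha : R) r (z p : 'rV[R]_d) :
  0 < alpha -> ext_valued r -> proper_fun r -> convex_efun r -> is_prox alpha r z p ->
  exists rp : R, r p = rp%:E /\
    forall s (rs : R), r s = rs%:E -> alpha * (rp - rs) <= dotv (p - z) (s - p).
Proof.
move=> a0 ev [s0 s0fin] cv px.
have [rp Erp] : exists rp, r p = rp%:E.
  move: (ev p) (px s0); case: (r p) => [rp _ _|_|]; [by exists rp | | by []].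
  have := ev s0; move: s0fin; case: (r s0) => [q||] //= _ _.
exists rp; split => // s rs Ers.
set a := p - z; set b := s - p.
apply: (@lim_arg _ _ _ (sqnorm b / 2)); first by rewrite divr_ge0 ?sqnorm_ge0.
move=> t /andP[t0 t1].
have key : t *: s + (1 - t) *: p - z = a + t *: b.
  by apply/rowP => j; rewrite /a /b !mxE; ring.
have hc := cv s p t; rewrite t0 t1 Ers Erp -!EFinM -EFinD in hc; have {}hc := hc isT.
have hp := px (t *: s + (1 - t) *: p); rewrite Erp key -EFinD in hp.
have : ((rp + (2 * alpha)^-1 * sqnorm a)%:E <=
       (t * rs + (1 - t) * rp + (2 * alpha)^-1 * sqnorm (a + t *: b))%:E)%E.
  by apply: le_trans hp _; rewrite [X in (_ <= X)%E]EFinD; apply: leeD2r; exact: hc.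

rewrite lee_fin sqnormD sqnormZ dotvZr => h.
set c := (2 * alpha)^-1 in h.
have ac : alpha * c = 2^-1 by rewrite /c invfM mulrCA divff ?mulr1 // gt_eqF.
set A := sqnorm a in h *; set S := sqnorm b in h *; set D := dotv a b in h *.
have h2 : t * (rp - rs) <= c * (2 * (t * D) + t ^+ 2 * S) by move: h; rewrite !mulrDr; lra.
have h3 := ler_wpM2l (ltW a0) h2.
rewrite [X in _ <= X]mulrA ac in h3.
move: h3; lra.
Qed.

Lemma prox_unique (R : realType) d (alpha : R) r (z p1 p2 : 'rV[R]_d) :
  0 < alpha -> ext_valued r -> proper_fun r -> convex_efun r ->
  is_prox alpha r z p1 -> is_prox alpha r z p2 -> p1 = p2.
Proof.
move=> a0 ev pr cv x1 x2.
have [r1 [E1 H1]] := @prox_sub R d alpha r z _ a0 ev pr cv x1.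
have [r2 [E2 H2]] := @prox_sub R d alpha r z _ a0 ev pr cv x2.
have h1 := H1 p2 r2 E2; have h2 := H2 p1 r1 E1.
have e : dotv (p1 - z) (p2 - p1) + dotv (p2 - z) (p1 - p2) = - sqnorm (p1 - p2).
  rewrite /sqnorm /dotv -big_split -sumrN; apply: eq_bigr => j _; rewrite !mxE /=; ring.
have hs : sqnorm (p1 - p2) = 0.
  by apply/le_anti; rewrite sqnorm_ge0 andbT; lra.
by apply/eqP; rewrite -subr_eq0; apply/eqP; exact: sqnorm_eq0.
Qed.

Lemma grad_ineq (R : realType) (d : nat) (f : 'rV[R]_d -> R) g x y :
  convex_fun f -> is_gradient f g -> f x + dotv (g x) (y - x) <= f y.
Proof.
move=> cf gf; have [dfx dfE] := gf x.
set h := y - x.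
have := @deriveE _ _ _ f x h dfx; rewrite -dfE => <-.
have cv := @diff_derivable _ _ _ f x h dfx.
rewrite -lerBrDl /derive.
set F := (fun t : R => _).
have cvr : cvg (F @ 0^'+).
  apply/cvg_ex; exists (lim (F @ 0^')).
  move=> A /cv /nbhs_ballP [_ /posnumP[e] xe_A].
  by exists e%:num => //= z xe_z /gt_eqF/negbT/xe_A; exact.
rewrite cvg_at_rightE //; apply: limr_le => //.
near=> t.
have t0 : 0 < t by near: t; exact: nbhs_right_gt.
have t1 : t < 1 by near: t; apply: nbhs_right_lt; exact: ltr01.
rewrite /F /= .
have := cf y x t; rewrite (ltW t0) (ltW t1) => /(_ isT).
have -> : t *: y + (1 - t) *: x = t *: h + x.
  by rewrite /h scalerBr scalerBl scale1r addrA addrAC.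
move=> H.
rewrite ler_pdivrMl // .
move: H; rewrite mulrBr mulrBl mul1r; lra.
Unshelve. all: by end_near.
Qed.

Theorem lemma1 (R : realType) (n d : nat) (alpha L : R)
  (f : 'I_n -> 'rV[R]_d -> R) (gradf : 'I_n -> 'rV[R]_d -> 'rV[R]_d)
  (r : 'rV[R]_d -> \bar R)
  (e : rel 'I_n) (W A B sqrtB : 'M[R]_n)
  (xs ws us : 'M[R]_(n, d)) :
  0 < alpha ->
  (forall i, convex_fun (f i)) ->
  (forall i, L_smooth L (f i) (gradf i)) ->
  ext_valued r -> proper_fun r -> closed_fun r -> convex_efun r ->
  undirected_connected e -> mixing_matrix e W ->
  AB_assumptions W A B -> is_psd_sqrt sqrtB B ->
  ws = xs - alpha *: (\matrix_(i < n) gradf i (row i xs)) ->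
  (forall i : 'I_n, is_prox alpha r (row i (A *m (ws - sqrtB *m us))) (row i xs)) ->
  sqrtB *m (ws - sqrtB *m us) = 0 ->
  exists x : 'rV[R]_d,
    (forall i : 'I_n, row i xs = x) /\
    (forall y : 'rV[R]_d,
       ((n%:R^-1)%:E * \sum_(i < n) ((f i x)%:E + r x) <=
        (n%:R^-1)%:E * \sum_(i < n) ((f i y)%:E + r y))%E).
Proof.
move=> a0 cvf smf ev pr cl cve _ _ [_ [_ [_ [A1 [_ [Bker _]]]]]] [[sT _] sB] Ews Hprox Hv.
set v := ws - sqrtB *m us in Hprox Hv.
have Bv : B *m v = 0 by rewrite -sB -mulmxA Hv mulmx0.
have vrows : forall i k, row i v = row k v.
  move=> i k; apply/rowP => j; rewrite !mxE.
  have hB : B *m col j v = 0.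
    apply/matrixP => l m; rewrite [RHS]mxE.
    transitivity ((B *m v) l j); last by rewrite Bv mxE.
    by rewrite !mxE; apply: eq_bigr => q _; rewrite !mxE.
  have [c Hc] := (Bker (col j v)).1 hB.
  have := congr1 (fun M : 'cV[R]_n => M i 0) Hc; have := congr1 (fun M : 'cV[R]_n => M k 0) Hc.
  by rewrite !mxE => -> ->.
have Av : forall i, row i (A *m v) = row i v.
  move=> i; rewrite row_mul mulmx_sum_row.
  under eq_bigr => k _ do rewrite (vrows k i).
  rewrite -scaler_suml.
  have -> : \sum_k row i A 0 k = 1.
    transitivity ((A *m ones R n) i 0); last by rewrite A1 mxE.
    by rewrite mxE; apply: eq_bigr => k _; rewrite !mxE mulr1.
  by rewrite scale1r.
have s1 : sqrtB *m ones R n = 0.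
  have B1 : B *m ones R n = 0 by apply/(Bker _).2; exists 1; rewrite scale1r.
  set u := sqrtB *m ones R n.
  have uu : \sum_k u k 0 ^+ 2 = 0.
    transitivity ((u^T *m u) 0 0).
      by rewrite mxE; apply: eq_bigr => k _; rewrite !mxE expr2.
    by rewrite /u trmx_mul sT -mulmxA (mulmxA sqrtB) sB B1 mulmx0 mxE.
  apply/matrixP => k l; rewrite (ord1 l) [RHS]mxE.
  have := psumr_eq0P (fun k _ => sqr_ge0 (u k 0)) uu.
  by move=> /(_ k isT) /eqP; rewrite sqrf_eq0 => /eqP.
have rs0 : \sum_i row i (sqrtB *m us) = 0.
  apply/rowP => j; rewrite summxE [RHS]mxE.
  under eq_bigr => i _ do rewrite !mxE.
  rewrite exchange_big /= big1 // => k _.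
  rewrite -mulr_suml.
  suff -> : \sum_i sqrtB i k = 0 by rewrite mul0r.
  transitivity ((sqrtB *m ones R n) k 0); last by rewrite s1 mxE.
  rewrite mxE; apply: eq_bigr => i _; rewrite !mxE mulr1.
  by have := congr1 (fun M : 'M[R]_n => M k i) sT; rewrite mxE.
have [n0|npos] := posnP n.
  subst n; exists 0; split => [[i hi]|y] //.
  by rewrite !big_ord0.
pose i0 := Ordinal npos.
have Hx : forall i, row i xs = row i0 xs.
  move=> i; apply: (@prox_unique R d alpha r _ _ _ a0 ev pr cve (Hprox i)).
  by rewrite Av (vrows i i0) -(Av i0); exact: Hprox i0.
exists (row i0 xs); split => // y.
set x := row i0 xs in Hx *.
have [rx [Erx _]] := @prox_sub R d alpha r _ _ a0 ev pr cve (Hprox i0).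
rewrite Hx in Erx.
have Hi : forall i (ry : R), r y = ry%:E ->
    alpha * (rx - ry) <= dotv (x - row i v) (y - x).
  move=> i ry Ery.
  have [rp [Erp Hp]] := @prox_sub R d alpha r _ _ a0 ev pr cve (Hprox i).
  rewrite Hx Erx in Erp; case: Erp => ->.
  by have := Hp y ry Ery; rewrite Av Hx.
have E : forall i, x - row i v = alpha *: gradf i x + row i (sqrtB *m us).
  move=> i; rewrite /v Ews -(Hx i); apply/rowP => j; rewrite !mxE /=; ring.
case Ery: (r y) => [ry | |].
- rewrite Erx.
  have Hr : \sum_(i < n) (rx - ry) <= \sum_(i < n) (f i y - f i x).
    rewrite -(ler_pM2l a0) !mulr_sumr.
    apply: (le_trans (ler_sum _ (fun i _ => Hi i ry Ery))).
    have S1 : \sum_(i < n) dotv (x - row i v) (y - x) =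
              \sum_(i < n) alpha * dotv (gradf i x) (y - x).
      under eq_bigr => i _ do rewrite E dotvDl dotvZl.
      by rewrite big_split /= -dotv_suml rs0 dotv0l addr0.
    rewrite S1; apply: ler_sum => i _; rewrite ler_pM2l //.
    have := @grad_ineq R d (f i) (gradf i) x y (cvf i) (smf i).1; lra.
  under eq_bigr do rewrite -EFinD.
  under [X in (_ <= _ * X)%E]eq_bigr do rewrite -EFinD.
  rewrite !sumEFin -!EFinM lee_fin ler_wpM2l ?invr_ge0 ?ler0n //.
  rewrite -subr_ge0 -sumrB.
  have -> : \sum_(i < n) ((f i y + ry) - (f i x + rx)) =
            \sum_(i < n) (f i y - f i x) - \sum_(i < n) (rx - ry).
    by rewrite -sumrB; apply: eq_bigr => i _; ring.
  by rewrite subr_ge0.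
- under [X in (_ <= _ * X)%E]eq_bigr do rewrite addey //.
  rewrite [X in (_ <= _ * X)%E](bigD1 i0) //= addye; last first.
    apply/eqP => Hs; have := @sume_ge0 R _ (fun _ => +oo%E) (fun i => i != i0) (fun _ _ => leey 0%E) (index_enum _).
    by rewrite Hs.
  by rewrite gt0_muley ?leey // lte_fin invr_gt0 ltr0n.
- by move: (ev y); rewrite Ery.
Qed.
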